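(* Let $B=2^{k_1}C_1\perp\cdots\perp2^{k_r}C_r\in\mathcal H_n(\mathfrak o)$ be a pre-optimal form, $B_1=2^{k_1}C_1\perp\cdots\perp2^{k_{r-1}}C_{r-1}$, $n_1=\deg B_1$, $n_2=\deg C_r$. (1) Let $n_2=1$. (1.1) If $n_1$ is even, then $\Delta(B)-\Delta(B_1)=k_r+2$ if $\mathrm{ord}(\det B_1)$ is odd; $=k_r+1$ if $\mathrm{ord}(\det B_1)$ is even and $\xi_{B_1}=0$; $=k_r$ if $\xi_{B_1}\ne0$. (1.2) If $n_1$ is odd, then $\Delta(B)-\Delta(B_1)=k_r$ if $\mathrm{ord}(\det B)$ is odd; $=k_r+1$ if $\mathrm{ord}(\det B)$ is even and $\xi_B=0$; $=k_r+2$ if $\xi_B\ne0$. (2) If $n_2=2$ and $C_r$ is unimodular diagonal, then $\Delta(B)=\Delta(B_1)+2k_r+2$. (3) If $C_r\in\frac12(S_2(\mathfrak o)_e\cap GL_2(\mathfrak o))$, then $\Delta(B)=\Delta(B_1)+2k_r$.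
   Context: Let $F$ be a finite unramified extension of $\mathbb Q_2$ with ring of integers $\mathfrak o$, $\mathrm{ord}$ the valuation with $\mathrm{ord}(2)=1$, $\mathrm{ord}(0)=+\infty$. $\mathcal H_n(\mathfrak o)$ is the set of symmetric $B=(b_{ij})\in M_n(F)$ with $b_{ii}\in\mathfrak o$, $2b_{ij}\in\mathfrak o$. $\perp$ is block-diagonal sum. For nondegenerate $B$ of degree $n$: $D_B=(-4)^{[n/2]}\det B$; $\xi_B=1,-1,0$ according as $D_B\in F^{\times2}$, $F(\sqrt{D_B})/F$ unramified quadratic, or ramified; $\mathfrak D_B$ is the discriminant ideal of $F(\sqrt{D_B})/F$ (the unit ideal if $D_B$ is a square); $\Delta(B)=\mathrm{ord}(D_B)$ if $n$ is odd and $\Delta(B)=\mathrm{ord}(D_B)-\mathrm{ord}(\mathfrak D_B)+1-\xi_B^2$ if $n$ is even. For the empty matrix, $\det=1$, $\xi=1$, $\Delta=0$. $S_2(\mathfrak o)_e$: symmetric $2\times2$ matrices over $\mathfrak o$ with diagonal in $2\mathfrak o$; unimodular diagonal: diagonal with unit entries. Pre-optimal forms: $B=2^{k_1}C_1\perp\cdots\perp2^{k_r}C_r$ with $k_i\ge0$, each $C_i$ unimodular diagonal or in $\frac12(S_2(\mathfrak o)_e\cap GL_2(\mathfrak o))$; $B^{[j]}=2^{k_1}C_1\perp\cdots\perp2^{k_j}C_j$; $\mathcal D_m=\{j:k_j=m,C_j\text{ diagonal}\}$, $\mathcal E_m=\{j:k_j=m,C_j\text{ not diagonal}\}$. Pre-optimal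 means: (PO1) $\sum_{j\in\mathcal D_m}\deg C_j\le2$ and $\mathcal E_m$ is a (possibly empty) set of consecutive integers, for each $m$; (PO2) for $i<j$: $i\in\mathcal D_{m_1},j\in\mathcal D_{m_2}\Rightarrow m_1\le m_2$; $i\in\mathcal E_{m_1},j\in\mathcal E_{m_2}\Rightarrow m_1\le m_2$; $i\in\mathcal D_{m_1},j\in\mathcal E_{m_2}\Rightarrow m_1\le m_2-1$; $i\in\mathcal E_{m_1},j\in\mathcal D_{m_2}\Rightarrow m_1\le m_2+1$; (PO3) if $C_i$ is unimodular diagonal of degree 2 then $i\ge2$ and either ($\deg B^{[i]}$ even and $\xi_{B^{[i-1]}}=\xi_{B^{[i]}}=0$) or ($\deg B^{[i-1]}$ odd and $\mathrm{ord}\det B^{[i-1]}+k_i$ even); (PO4) if $k_i=k_{i-1}-1$, $C_i$ diagonal, $C_{i-1}$ not diagonal, then $\deg C_i=2$, or $\deg C_i=1$ and either ($\deg B^{[i]}$ and $\mathrm{ord}\det B^{[i]}$ even) or ($\deg B^{[i]}$ odd and $\xi_{B^{[i-1]}}=0$); (PO5) if $C_i$ diagonal, $C_{i+1}$ not diagonal, $k_i=k_{i+1}-1$, then $\deg C_i=1$ and either ($\deg B^{[i]}$ even and $\mathrm{ord}\det B^{[i]}$ odd) or ($\deg B^{[i]}$ odd and $\xi_{B^{[i-1]}}\ne0$ if $i\ge2$); (PO6) if $\deg B^{[i]}$ even, $C_i,C_{i+1}$ unimodular diagonal, $k_{i+1}=k_i+1$, then $\xi_{B^{[i]}}=0$.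 *)

(* Defs.v *)
From HB Require Import structures.
From mathcomp Require Import all_boot all_order all_algebra.
From Stdlib Require Import ClassicalEpsilon.
Set Implicit Arguments. Unset Strict Implicit. Unset Printing Implicit Defensive.
Import Order.TTheory GRing.Theory Num.Theory.
Local Open Scope ring_scope.

Section Local2adic.
Variables (F : fieldType) (v : F -> int).

(* x in the valuation ring o  (ord 0 = +oo) *)
Definition integ (x : F) : bool := (x == 0) || (0 <= v x).
Definition unitb (x : F) : bool := (x != 0) && (v x == 0).

(* F together with ord is a complete discretely valued field with uniformizer 2
   (ord(2) = 1) and finite residue field o/2o; these are exactly the finite
   unramified extensions of Q_2. *)
Record unram2adic : Prop := Unram2adic {
  two_neq0 : (2%:R : F) != 0;
  v_mul : forall x y, x != 0 -> y != 0 -> v (x * y) = v x + v y;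
  v_add : forall x y, x != 0 -> y != 0 -> x + y != 0 ->
          Num.min (v x) (v y) <= v (x + y);
  v_two : v 2%:R = 1;
  residue_finite : exists s : seq F, forall x, integ x ->
          exists2 y, y \in s & (x == y) || (1 <= v (x - y));
  complete : forall u : nat -> F,
     (forall e : int, exists N, forall m n, (N <= m)%N -> (N <= n)%N ->
         (u m == u n) || (e <= v (u m - u n))) ->
     exists L, forall e : int, exists N, forall n, (N <= n)%N ->
         (u n == L) || (e <= v (u n - L))
}.

Definition oddz (z : int) : bool := odd `|z|%N.

Definition pb (P : Prop) : bool := if excluded_middle_informative P then true else false.
Lemma pbP (P : Prop) : P -> pb P.
Proof. by rewrite /pb; case: excluded_middle_informative. Qed.

Definition is_square (D : F) : Prop := exists y : F, y * y = D.

(* The algebra F(sqrt D) = F[X]/(X^2 - D), elements a + b sqrt D as pairs (a,b). *)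
Definition addK (x y : F * F) : F * F := (x.1 + y.1, x.2 + y.2).
Definition mulK (D : F) (x y : F * F) : F * F :=
  (x.1 * y.1 + D * x.2 * y.2, x.1 * y.2 + x.2 * y.1).
Definition evalK (D : F) (p : {poly F}) (x : F * F) : F * F :=
  foldr (fun c acc => addK (c, 0) (mulK D acc x)) (0, 0) p.
Definition intK (D : F) (x : F * F) : Prop :=
  exists p : {poly F}, p \is monic /\ (forall i, integ p`_i) /\ evalK D p x = (0, 0).
Definition trK (x : F * F) : F := 2%:R * x.1.
Definition detTr (D : F) (x1 x2 : F * F) : F :=
  trK (mulK D x1 x1) * trK (mulK D x2 x2) - trK (mulK D x1 x2) ^+ 2.
Definition discset (D : F) (n : nat) : Prop :=
  exists x1 x2, intK D x1 /\ intK D x2 /\ detTr D x1 x2 != 0 /\ v (detTr D x1 x2) = n%:Z.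

Lemma discset_ex (D : F) : (exists n, discset D n) -> exists n, pb (discset D n).
Proof. by case=> n Hn; exists n; apply: pbP. Qed.

(* ord of the discriminant ideal of F(sqrt D)/F : the ideal generated by all the
   discriminants d(x1,x2) of bases contained in O_K, i.e. the minimal ord;
   the unit ideal if D is a square. *)
Definition ordDisc (D : F) : nat :=
  if pb (is_square D) then 0%N else
  match excluded_middle_informative (exists n, discset D n) with
  | left H => ex_minn (discset_ex H)
  | right _ => 0%N
  end.

(* xi : 1 if square, -1 if F(sqrt D)/F unramified quadratic (discriminant ideal
   is the unit ideal), 0 if ramified *)
Definition xi (D : F) : int :=
  if pb (is_square D) then 1 else if ordDisc D == 0%N then -1 else 0.

Definition DB n (M : 'M[F]_n) : F := (-4) ^+ (n./2) * \det M.
Definition xiB n (M : 'M[F]_n) : int := xi (DB M).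
Definition Delta n (M : 'M[F]_n) : int :=
  if odd n then v (DB M)
  else v (DB M) - (ordDisc (DB M))%:Z + 1 - (xiB M) ^+ 2.

Definition unimod_diag n (M : 'M[F]_n) : bool :=
  [forall i, forall j, (i != j) ==> (M i j == 0)] && [forall i, unitb (M i i)].
(* M in 1/2 (S_2(o)_e \cap GL_2(o)) *)
Definition half_even_unimod n (M : 'M[F]_n) : bool :=
  (n == 2)%N && [forall i, forall j, (M i j == M j i) && integ (2%:R * M i j)]
  && [forall i, integ (M i i)] && unitb (\det (2%:R *: M)).

(* block data: block i (0-based) is 2^(k i) C i of size d i *)
Fixpoint dsum (d : nat -> nat) (j : nat) : nat :=
  match j with 0 => 0%N | j'.+1 => (dsum d j' + d j')%N end.

Fixpoint Bpre (d k : nat -> nat) (C : forall i, 'M[F]_(d i)) (j : nat)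
  : 'M[F]_(dsum d j) :=
  match j return 'M[F]_(dsum d j) with
  | 0 => 0
  | j'.+1 => block_mx (Bpre k C j') 0 0 ((2%:R ^+ k j') *: C j')
  end.

(* Pre-optimality of 2^{k_0}C_0 _|_ ... _|_ 2^{k_{N-1}}C_{N-1}; paper index i = our i+1,
   paper B^[i] = Bpre (i+1) *)
Definition preoptimal (N : nat) (d k : nat -> nat) (C : forall i, 'M[F]_(d i)) : Prop :=
  let dg i := unimod_diag (C i) in
  let B j := Bpre k C j in
  (forall i, (i < N)%N -> (0 < d i)%N /\ (dg i || half_even_unimod (C i))) /\
  (forall m : nat,
     (\sum_(i < N | (k i == m) && dg i) d i <= 2)%N /\
     (forall i j l, (i <= j <= l)%N -> (l < N)%N ->
        k i = m -> ~~ dg i -> k l = m -> ~~ dg l -> k j = m /\ ~~ dg j)) /\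
  (forall i j, (i < j < N)%N ->
     (dg i -> dg j -> (k i <= k j)%N) /\
     (~~ dg i -> ~~ dg j -> (k i <= k j)%N) /\
     (dg i -> ~~ dg j -> (k i + 1 <= k j)%N) /\
     (~~ dg i -> dg j -> (k i <= k j + 1)%N)) /\
  (forall i, (i < N)%N -> dg i -> d i = 2%N ->
     (1 <= i)%N /\
     ((~~ odd (dsum d i.+1) /\ xiB (B i) = 0 /\ xiB (B i.+1) = 0) \/
      (odd (dsum d i) /\ ~~ oddz (v (\det (B i)) + (k i)%:Z)))) /\
  (forall i, (1 <= i)%N -> (i < N)%N -> k (i.-1) = (k i).+1 -> dg i -> ~~ dg (i.-1) ->
     d i = 2%N \/
     (d i = 1%N /\
      ((~~ odd (dsum d i.+1) /\ ~~ oddz (v (\det (B i.+1)))) \/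
       (odd (dsum d i.+1) /\ xiB (B i) = 0)))) /\
  (forall i, (i.+1 < N)%N -> dg i -> ~~ dg i.+1 -> k i.+1 = (k i).+1 ->
     d i = 1%N /\
     ((~~ odd (dsum d i.+1) /\ oddz (v (\det (B i.+1)))) \/
      (odd (dsum d i.+1) /\ ((1 <= i)%N -> xiB (B i) != 0)))) /\
  (forall i, (i.+1 < N)%N -> ~~ odd (dsum d i.+1) -> dg i -> dg i.+1 ->
     k i.+1 = (k i).+1 -> xiB (B i.+1) = 0).

End Local2adic.
Arguments preoptimal [F] v N d k C.

(* Main.v *)
Require Import Defs.
From HB Require Import structures.
From mathcomp Require Import all_boot all_order all_algebra.
From mathcomp Require Import zify ring.
From Stdlib Require Import ClassicalEpsilon.
Set Implicit Arguments. Unset Strict Implicit. Unset Printing Implicit Defensive.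
Import Order.TTheory GRing.Theory Num.Theory.
Local Open Scope ring_scope.

Lemma int_neg1 (z : int) : z < 0 -> 1 <= - z. Proof. lia. Qed.
Lemma int_nonpos (z : int) : z <= 0 -> 0 <= - z. Proof. lia. Qed.

Lemma nat_aux (i0 j0 j : nat) : (j < (i0 + j0).+1)%N -> (i0 < j)%N -> (i0 + j0 - j < j0)%N.
Proof. lia. Qed.

Section Val.
Variables (F : fieldType) (v : F -> int) (HF : unram2adic v).

Local Notation vM := (v_mul HF).

Lemma v1 : v 1 = 0.
Proof. have h : v (1 * 1) = v 1 + v 1 := vM (oner_neq0 F) (oner_neq0 F). move: h; rewrite mulr1; lia. Qed.

Lemma vN1 : v (-1) = 0.
Proof.
have h : (-1 : F) != 0 by rewrite oppr_eq0 oner_neq0.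
have h2 : v (-1 * -1) = v (-1) + v (-1) := vM h h. move: h2; rewrite mulrNN mulr1 v1; lia.
Qed.

Lemma vN x : x != 0 -> v (- x) = v x.
Proof.
move=> hx; have h : (-1 : F) != 0 by rewrite oppr_eq0 oner_neq0.
by rewrite -mulN1r vM // vN1 add0r.
Qed.

Lemma vV x : x != 0 -> v x^-1 = - v x.
Proof.
move=> hx; have hi : x^-1 != 0 by rewrite invr_eq0.
have h : v (x * x^-1) = v x + v x^-1 := vM hx hi. move: h; rewrite mulfV // v1; lia.
Qed.

Lemma vX x n : x != 0 -> v (x ^+ n) = v x * n%:Z.
Proof.
move=> hx; elim: n => [|n IH]; first by rewrite expr0 v1 mulr0.
rewrite exprS vM ?expf_neq0 // IH; lia.
Qed.

Lemma two_neq0' : (2%:R : F) != 0. Proof. exact: two_neq0 HF. Qed.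
Lemma v2 : v 2%:R = 1. Proof. exact: v_two HF. Qed.

Lemma four_neq0 : (4%:R : F) != 0.
Proof. have -> : (4%:R : F) = 2%:R * 2%:R by rewrite -natrM. by rewrite mulf_neq0 // two_neq0'. Qed.

Lemma v4 : v 4%:R = 2.
Proof. have -> : (4%:R : F) = 2%:R * 2%:R by rewrite -natrM. by rewrite vM ?two_neq0' // v2. Qed.

Lemma vN4 : v (- 4%:R) = 2.
Proof. by rewrite vN ?four_neq0 // v4. Qed.

Lemma strict x y : x != 0 -> y != 0 -> v x < v y -> (x + y != 0) /\ v (x + y) = v x.
Proof.
move=> hx hy lt.
have hs : x + y != 0.
  apply/negP => /eqP h; have : x = - y by rewrite -[x]addr0 -(subrr y) addrA h add0r.
  move=> e; move: lt; rewrite e vN //; lia.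
split=> //.
have hny : - y != 0 by rewrite oppr_eq0.
have h1 : x + y + - y != 0 -> Num.min (v (x + y)) (v (- y)) <= v (x + y + - y) := v_add HF hs hny.
rewrite addrK in h1; have h3 := h1 hx.
have h2 : Num.min (v x) (v y) <= v (x + y) := v_add HF hx hy hs.
have h4 : v (- y) = v y by rewrite vN.
move: lt h2 h3 h4. rewrite /Order.min. case: ifP; case: ifP; lia.
Qed.

Definition m2 (x : F) : bool := (x == 0) || (1 <= v x).

Lemma integ0 : integ v 0. Proof. by rewrite /integ eqxx. Qed.
Lemma integ1 : integ v 1. Proof. by rewrite /integ v1 lexx orbT. Qed.

Lemma integD x y : integ v x -> integ v y -> integ v (x + y).
Proof.
rewrite /integ; case: (eqVneq x 0) => [->|hx]; first by rewrite add0r.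
case: (eqVneq y 0) => [->|hy]; first by rewrite addr0 (negPf hx).
case: (eqVneq (x + y) 0) => [->|hs] //= h1 h2.
have h3 : Num.min (v x) (v y) <= v (x + y) := v_add HF hx hy hs.
move: h3; rewrite /Order.min; case: ifP; lia.
Qed.

Lemma integN x : integ v x -> integ v (- x).
Proof.
rewrite /integ; case: (eqVneq x 0) => [->|hx]; first by rewrite oppr0 eqxx.
by rewrite oppr_eq0 (negPf hx) /= vN.
Qed.

Lemma integM x y : integ v x -> integ v y -> integ v (x * y).
Proof.
rewrite /integ; case: (eqVneq x 0) => [->|hx]; first by rewrite mul0r eqxx.
case: (eqVneq y 0) => [->|hy]; first by rewrite mulr0 eqxx.
rewrite mulf_eq0 (negPf hx) (negPf hy) /= vM //; lia.
Qed.

Lemma integB x y : integ v x -> integ v y -> integ v (x - y).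
Proof. by move=> hx hy; apply: integD => //; apply: integN. Qed.

Lemma integn n : integ v n%:R.
Proof. elim: n => [|n IH]; first exact: integ0. by rewrite mulrS integD ?integ1. Qed.

Lemma m20 : m2 0. Proof. by rewrite /m2 eqxx. Qed.

Lemma m2D x y : m2 x -> m2 y -> m2 (x + y).
Proof.
rewrite /m2; case: (eqVneq x 0) => [->|hx]; first by rewrite add0r.
case: (eqVneq y 0) => [->|hy]; first by rewrite addr0 (negPf hx).
case: (eqVneq (x + y) 0) => [->|hs] //= h1 h2.
have h3 : Num.min (v x) (v y) <= v (x + y) := v_add HF hx hy hs.
move: h3; rewrite /Order.min; case: ifP; lia.
Qed.

Lemma m2M x y : m2 x -> integ v y -> m2 (x * y).
Proof.
rewrite /m2 /integ; case: (eqVneq x 0) => [->|hx]; first by rewrite mul0r eqxx.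
case: (eqVneq y 0) => [->|hy]; first by rewrite mulr0 eqxx.
rewrite mulf_eq0 (negPf hx) (negPf hy) /= vM //; lia.
Qed.

Lemma m2Mr x y : integ v x -> m2 y -> m2 (x * y).
Proof. by move=> hx hy; rewrite mulrC m2M. Qed.

Lemma m2_nonunit x : integ v x -> ~~ unitb v x -> m2 x.
Proof.
rewrite /m2 /integ /unitb; case: (eqVneq x 0) => [->|hx] //=. lia.
Qed.

Lemma unitbM x y : unitb v x -> unitb v y -> unitb v (x * y).
Proof.
rewrite /unitb => /andP[hx /eqP ex] /andP[hy /eqP ey].
by rewrite mulf_neq0 //= vM // ex ey.
Qed.

Lemma unitb1 : unitb v 1. Proof. by rewrite /unitb oner_neq0 v1. Qed.

Lemma unit_m2 x y : unitb v x -> m2 y -> ~~ m2 (x + y).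
Proof.
rewrite /unitb /m2 => /andP[hx /eqP ex].
case: (eqVneq y 0) => [->|hy] /=.
  by rewrite addr0 (negPf hx) ex.
move=> h; have hlt : v x < v y by rewrite ex; move: h => /= h; lia.
have [hs e] := strict hx hy hlt.
by rewrite (negPf hs) /= e ex.
Qed.

Lemma unit_integ x : unitb v x -> integ v x.
Proof. by rewrite /unitb /integ => /andP[_ /eqP ->]; rewrite lexx orbT. Qed.

Lemma unitbN x : unitb v x -> unitb v (- x).
Proof. by rewrite /unitb oppr_eq0 => /andP[h e]; rewrite h vN. Qed.

Lemma unit14 c : integ v c -> unitb v (1 + 4%:R * c).
Proof.
move=> hc; case: (eqVneq c 0) => [->|hc0]; first by rewrite mulr0 addr0 unitb1.
have h4 : (4%:R : F) * c != 0 by rewrite mulf_neq0 // four_neq0.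
have hv : v 1 < v (4%:R * c) by rewrite vM ?four_neq0 // v4 v1; move: hc; rewrite /integ (negPf hc0) /=; lia.
have [hs e] := strict (oner_neq0 F) h4 hv.
by rewrite /unitb hs e v1.
Qed.


Lemma minval (s : seq F) : has (fun y => y != 0) s ->
  exists2 x, x \in s & (x != 0) && all (fun y => (y == 0) || (v x <= v y)) s.
Proof.
elim: s => [|a s IH] //=.
case: (eqVneq a 0) => [->|ha] /=.
  move/IH => [x xs /andP[hx hall]]; exists x; first by rewrite in_cons xs orbT.
  by rewrite hx /= ?eqxx /= ?hall.
case hs: (has _ s).
  case: (IH hs) => x xs /andP[hx hall].
  case: (leP (v a) (v x)) => [le|lt].
    exists a; first exact: mem_head.
    rewrite ?ha lexx ?orbT /=; apply/allP => y ys.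
    by case/orP: (allP hall y ys) => [->//|h]; rewrite (le_trans le h) orbT.
  exists x; first by rewrite in_cons xs orbT.
  by rewrite hx (ltW lt) ?orbT hall.
exists a; first exact: mem_head.
rewrite ?ha lexx ?orbT /=; apply/allP => y ys.
move/negbT: hs; rewrite -all_predC => /allP /(_ y ys) /=.
by rewrite negbK => ->.
Qed.

Lemma lead_in (p : {poly F}) : p != 0 -> lead_coef p \in (p : seq F).
Proof.
move=> hp; rewrite lead_coefE; apply: mem_nth.
by rewrite ltn_predL size_poly_gt0.
Qed.

Lemma coef_in (p : {poly F}) j : p`_j != 0 -> p`_j \in (p : seq F).
Proof.
move=> h; apply: mem_nth; rewrite ltnNge; apply/negP => hj.
by move: h; rewrite nth_default // eqxx.
Qed.

Lemma scale_integ (p : {poly F}) x : x \in (p : seq F) -> x != 0 ->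
  all (fun y => (y == 0) || (v x <= v y)) p ->
  (forall j, integ v (x^-1 * p`_j)) /\ (exists j, unitb v (x^-1 * p`_j)).
Proof.
move=> xin x0 hall; split.
  move=> j; case: (eqVneq p`_j 0) => [->|hj]; first by rewrite mulr0 integ0.
  case/orP: (allP hall _ (coef_in hj)) => [/eqP e|le]; first by rewrite e eqxx in hj.
  have le' : v x <= v p`_j by exact: le.
  rewrite /integ mulf_eq0 invr_eq0 (negPf x0) (negPf hj) /= vM ?invr_eq0 // vV //.
  by rewrite addrC subr_ge0.
exists (index x p); rewrite nth_index // mulVf //; exact: unitb1.
Qed.

Lemma gauss (s q : {poly F}) : s \is monic -> q \is monic ->
  (forall i, integ v (s * q)`_i) -> forall i, integ v q`_i.
Proof.
move=> sm qm hp i; apply/idPn => hi.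
have qnz : q != 0 := monic_neq0 qm.
have snz : s != 0 := monic_neq0 sm.
have hasq : has (fun y => y != 0) q.
  by apply/hasP; exists (lead_coef q); [exact: lead_in | rewrite lead_coef_eq0].
have hass : has (fun y => y != 0) s.
  by apply/hasP; exists (lead_coef s); [exact: lead_in | rewrite lead_coef_eq0].
have [xq xqin /andP[xq0 hallq]] := minval hasq.
have [xs xsin /andP[xs0 halls]] := minval hass.
have qi0 : q`_i != 0 by apply: contraNneq hi => ->; exact: integ0.
have vqi : v q`_i < 0 by move: hi; rewrite /integ (negPf qi0) /= ltNge.
have vxq : v xq < 0.
  case/orP: (allP hallq _ (coef_in qi0)) => [/eqP e|le]; first by rewrite e eqxx in qi0.
  exact: le_lt_trans le vqi.
have vxs : v xs <= 0.
  case/orP: (allP halls _ (lead_in snz)) => [|le]; first by rewrite lead_coef_eq0 (negPf snz).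
  by move: le; rewrite (monicP sm) v1.
have [hQ [iq uQ]] := scale_integ xqin xq0 hallq.
have [hS [js uS]] := scale_integ xsin xs0 halls.
set Q := xq^-1 *: q; set S := xs^-1 *: s.
have hQ' : forall j, integ v Q`_j by move=> j; rewrite coefZ.
have hS' : forall j, integ v S`_j by move=> j; rewrite coefZ.
have exQ : exists j, unitb v Q`_j by exists iq; rewrite coefZ.
have exS : exists j, unitb v S`_j by exists js; rewrite coefZ.
have mQS : forall n, m2 (Q * S)`_n.
  move=> n; rewrite /Q /S -scalerAl -scalerAr !coefZ.
  apply: m2M.
    by rewrite /m2 invr_eq0 (negPf xq0) /= vV // int_neg1.
  apply: integM; last by rewrite mulrC; exact: hp.
  by rewrite /integ invr_eq0 (negPf xs0) /= vV // int_nonpos.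
have [i0 Pi0 mini0] := ex_minnP exQ.
have [j0 Pj0 minj0] := ex_minnP exS.
have := mQS (i0 + j0)%N.
rewrite coefM (bigD1 (Ordinal (ltn_addr j0 (ltnSn i0) : (i0 < (i0 + j0).+1)%N))) //=.
rewrite addKn.
apply/negP; apply: unit_m2 => //; first exact: unitbM.
apply: (big_ind m2); [exact: m20 | exact: m2D |].
move=> [j hj] /= hne.
have hne' : j != i0 by apply: contra hne => /eqP e; apply/eqP/val_inj => /=.
case: (ltnP j i0) => hlt.
  apply: m2M; last exact: hS'.
  apply: m2_nonunit => //; apply/negP => u.
  by have := mini0 _ u; rewrite leqNgt hlt.
apply: m2Mr => //; apply: m2_nonunit => //; apply/negP => u.
have := minj0 _ u; rewrite leqNgt; move/negP; apply.
apply: (nat_aux hj); by rewrite ltn_neqAle eq_sym hne' hlt.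
Qed.



Lemma det2 (M : 'M[F]_2) : \det M = M 0 0 * M 1 1 - M 0 1 * M 1 0.
Proof.
rewrite (expand_det_row _ 0) !big_ord_recl big_ord0 /cofactor !det_mx11 !mxE /=.
have L : forall (i : 'I_2) (j : 'I_1), lift i j = (if i == 0 then 1 else 0) :> 'I_2.
  by move=> i j; apply/val_inj; case: i => [[|[|]]] //= ?; case: j => [[|]].
rewrite !L /= !expr0 !expr1; ring.
Qed.

Definition phi (D : F) (y : F * F) : 'M[F]_2 :=
  \matrix_(i < 2, j < 2) (if i == j then y.1 else if (i : nat) == 0%N then D * y.2 else y.2).

Lemma phi_step D c acc x : phi D (addK (c, 0) (mulK D acc x)) = phi D acc * phi D x + c%:M.
Proof.
apply/matrixP => i j; rewrite -mulmxE !mxE big_ord_recl big_ord1 !mxE.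
by case: i => [[|[|i]] Hi] //; case: j => [[|[|j]] Hj] //=; rewrite /addK /mulK /= ?mulr0n ?mulr1n; ring.
Qed.

Lemma phi0 D : phi D (0, 0) = 0.
Proof. by apply/matrixP => i j; rewrite !mxE /= mulr0 !if_same. Qed.

Lemma phi_inj D y : phi D y = 0 -> y = (0, 0).
Proof.
move=> h; have h00 := congr1 (fun M : 'M[F]_2 => M 0 0) h.
have h10 := congr1 (fun M : 'M[F]_2 => M 1 0) h.
move: h00 h10; clear h; case: y => a b; by rewrite !mxE /= => -> ->.
Qed.

Lemma phi_evalK D p x : phi D (evalK D p x) = horner_mx (phi D x) p.
Proof.
rewrite -{2}(polyseqK p) /evalK; elim: (polyseq p) => [|c s IH] /=.
  by rewrite phi0 rmorph0.
by rewrite phi_step IH cons_poly_def rmorphD rmorphM /= horner_mx_X horner_mx_C.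
Qed.

Lemma monic_div_integ (A : 'M[F]_2) p q : p \is monic -> (forall i, integ v p`_i) ->
  horner_mx A p = 0 -> q \is monic -> horner_mx A q = 0 ->
  (forall r : {poly F}, (size r < size q)%N -> horner_mx A r = 0 -> r = 0) ->
  forall i, integ v q`_i.
Proof.
move=> pm pint hp qm hq hrem.
have qnz := monic_neq0 qm.
have hr : p %% q = 0.
  apply: hrem; first by rewrite ltn_modp.
  have := congr1 (horner_mx A) (divp_eq p q).
  by rewrite rmorphD rmorphM /= hq mulr0 add0r hp => <-.
have e : p = (p %/ q) * q by rewrite {1}(divp_eq p q) hr addr0.
apply: (gauss (s := p %/ q)) => //; last by rewrite -e.
by rewrite -(monicMr _ qm) -e.
Qed.

Lemma phi_scalar D a : phi D (a, 0) = a%:M.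
Proof. by apply/matrixP => i j; rewrite !mxE /= mulr0 if_same; case: (i == j). Qed.

Lemma rem1 D a (r : {poly F}) : (size r < 2)%N -> horner_mx (phi D (a, 0)) r = 0 -> r = 0.
Proof.
move=> sr; rewrite [r]size1_polyC // horner_mx_C => h.
have := congr1 (fun M : 'M[F]_2 => M 0 0) h; rewrite !mxE /= mulr1n => ->.
by rewrite polyC0.
Qed.

Lemma rem2 D a b (r : {poly F}) : b != 0 -> (size r < 3)%N -> horner_mx (phi D (a, b)) r = 0 -> r = 0.
Proof.
move=> b0 sr hr.
have er : r = (r`_0)%:P + (r`_1)%:P * 'X.
  apply/polyP => i; rewrite coefD coefC coefMX coefC.
  case: i => [|[|i]] /=; rewrite ?addr0 ?add0r //.
  by rewrite nth_default // -ltnS; exact: leq_trans sr (leq_addr i 3).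
move: hr; rewrite er rmorphD rmorphM /= !horner_mx_C horner_mx_X => h.
have h10 := congr1 (fun M : 'M[F]_2 => M 1 0) h.
have h00 := congr1 (fun M : 'M[F]_2 => M 0 0) h.
move: h10 h00; rewrite -mulmxE !mxE big_ord_recl big_ord1 big_ord_recl big_ord1 !mxE /= !mulr0n !mulr1n !mul0r !add0r.
move=> /eqP; rewrite mulf_eq0 (negPf b0) orbF => /eqP ->.
by rewrite mul0r !addr0 => ->; rewrite !polyC0 mul0r addr0.
Qed.

Lemma norm_integ D x : intK v D x -> integ v (x.1 * x.1 - D * x.2 * x.2).
Proof.
case=> p [pm [pint px]].
have hp : horner_mx (phi D x) p = 0 by rewrite -phi_evalK px phi0.
clear px; case: x hp => a b hp /=.
case: (eqVneq b 0) => [eb|b0].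
  subst b.
  have hq : horner_mx (phi D (a, 0)) ('X - a%:P) = 0.
    by rewrite rmorphB /= horner_mx_X horner_mx_C phi_scalar subrr.
  have := monic_div_integ pm pint hp (monicXsubC a) hq.
  move=> /(_ _ 0%N); rewrite coefB coefX coefC /= sub0r => H.
  have ha : integ v a.
    have hr : forall r : {poly F}, (size r < size ('X - a%:P)%R)%N ->
      horner_mx (phi D (a, 0)) r = 0 -> r = 0.
      by move=> r; rewrite size_XsubC; exact: rem1.
    by rewrite -[a]opprK; apply: integN; exact: H.
  by rewrite mulr0 subr0; apply: integM.
have hq := Cayley_Hamilton (phi D (a, b)).
have hr : forall r : {poly F}, (size r < size (char_poly (phi D (a, b))))%N ->
   horner_mx (phi D (a, b)) r = 0 -> r = 0.
  by move=> r; rewrite size_char_poly; exact: rem2.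
have := monic_div_integ pm pint hp (char_poly_monic _) hq hr 0%N.
rewrite char_poly_det det2 !mxE /=.
have -> : ((-1) ^+ 2 : F) = 1 by rewrite sqrrN expr1n.
by rewrite mul1r.
Qed.


Lemma intK_of D x (p : {poly F}) : p \is monic -> (forall i, integ v p`_i) ->
  horner_mx (phi D x) p = 0 -> intK v D x.
Proof.
move=> pm pint hp; exists p; split=> //; split=> //.
by apply: (@phi_inj D); rewrite phi_evalK.
Qed.

Lemma integ_coefC c i : integ v c -> integ v (c%:P)`_i.
Proof. by rewrite coefC; case: (i == 0%N) => // _; exact: integ0. Qed.

Lemma integ_coefX i : integ v ('X : {poly F})`_i.
Proof. by rewrite coefX integn. Qed.

Lemma integ_coefXn n i : integ v ('X^n : {poly F})`_i.
Proof. by rewrite coefXn integn. Qed.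

Lemma intK1 D : intK v D (1, 0).
Proof.
apply: (intK_of (p := 'X - 1%:P)); first exact: monicXsubC.
  by move=> i; rewrite coefB; apply: integB; [exact: integ_coefX | exact/integ_coefC/integ1].
by rewrite rmorphB /= horner_mx_X horner_mx_C phi_scalar subrr.
Qed.

Lemma intK0t D t : integ v (D * t * t) -> intK v D (0, t).
Proof.
move=> ht.
apply: (intK_of (p := 'X^2 - (D * t * t)%:P)); first exact: monicXnsubC.
  by move=> i; rewrite coefB; apply: integB; [exact: integ_coefXn | exact: integ_coefC].
rewrite rmorphB rmorphXn /= horner_mx_X horner_mx_C.
apply/matrixP => i j; rewrite expr2 -mulmxE !mxE big_ord_recl big_ord1 !mxE.
by case: i => [[|[|i]] Hi] //; case: j => [[|[|j]] Hj] //=;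
  rewrite ?mulr0n ?mulr1n; ring.
Qed.

Lemma intKhalf D s c : s != 0 -> integ v c -> D = s * s * (1 + 4%:R * c) ->
  intK v D (2%:R^-1, (2%:R * s)^-1).
Proof.
move=> s0 hc hD.
have h2 := two_neq0'.
apply: (intK_of (p := 'X^2 - 'X - c%:P)).
- apply/monicP; rewrite -addrA lead_coefDl ?lead_coefXn //.
  by rewrite size_polyXn -opprD size_polyN size_XaddC.
- move=> i; rewrite !coefB; apply: integB; last exact: integ_coefC.
  by apply: integB; [exact: integ_coefXn | exact: integ_coefX].
rewrite !rmorphB rmorphXn /= horner_mx_X horner_mx_C.
apply/matrixP => i j; rewrite expr2 -mulmxE !mxE big_ord_recl big_ord1 !mxE.
case: i => [[|[|i]] Hi] //; case: j => [[|[|j]] Hj] //=;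
  rewrite ?mulr0n ?mulr1n ?hD; field; by apply/andP; split.
Qed.


Lemma exists_pow (z : int) : exists t : F, t != 0 /\ v t = z.
Proof.
have h2 := two_neq0'.
case: z => n.
  by exists (2%:R ^+ n); rewrite expf_neq0 // vX // v2 mul1r.
exists (2%:R ^+ n.+1)^-1; rewrite invr_eq0 expf_neq0 // vV ?expf_neq0 // vX // v2 mul1r.
by rewrite NegzE.
Qed.

Lemma detTrE D (x1 x2 : F * F) :
  detTr D x1 x2 = 4%:R * D * (x1.1 * x2.2 - x2.1 * x1.2) ^+ 2.
Proof. rewrite /detTr /trK /mulK /=; ring. Qed.

Lemma vMn x y : x != 0 -> y != 0 -> v (x * y) = v x + v y.
Proof. exact: vM. Qed.

Lemma disc_wit D : D != 0 -> discset v D (if oddz (v D) then 3 else 2).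
Proof.
move=> D0.
have [t [t0 vt]] := exists_pow (- (v D %/ 2)%Z).
have Dtt0 : D * t * t != 0 by rewrite !mulf_neq0.
have vDtt : v (D * t * t) = v D - 2 * (v D %/ 2)%Z by rewrite !vM ?mulf_neq0 // vt; lia.
have hpar : (v (D * t * t) = 0 /\ ~~ oddz (v D)) \/ (v (D * t * t) = 1 /\ oddz (v D)).
  rewrite vDtt /oddz; move: (v D) => z; lia.
exists (1, 0), (0, t); split; first exact: intK1.
split.
  by apply: intK0t; rewrite /integ (negPf Dtt0) /=; case: hpar => [[-> _]|[-> _]].
rewrite detTrE /= mul1r mul0r subr0.
have e : 4%:R * D * t ^+ 2 = 4%:R * (D * t * t) by rewrite expr2 !mulrA.
rewrite e mulf_neq0 ?four_neq0 //= vM ?four_neq0 // v4.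
by case: hpar => [[-> /negPf ->]|[-> ->]].
Qed.

Lemma norm_bounds D a b : D != 0 -> oddz (v D) -> integ v (a * a - D * b * b) ->
    (a = 0 \/ 0 <= v a) /\ (b = 0 \/ 0 <= v D + 2 * v b).
Proof.
move=> D0 odd_vD hN.
case: (eqVneq a 0) => [a0|a0]; case: (eqVneq b 0) => [b0|b0].
- by split; left.
- split; [by left|right].
  move: hN; rewrite a0 mul0r sub0r => /integN; rewrite opprK /integ.
  rewrite !mulf_eq0 (negPf D0) (negPf b0) /= !vM ?mulf_neq0 //.
  by move: (v D) (v b) => x y; lia.
- split; [right|by left].
  move: hN; rewrite b0 !mulr0 subr0 /integ mulf_eq0 (negPf a0) /= vM //.
  by move: (v a) => x; lia.
have haa : a * a != 0 by rewrite mulf_neq0.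
have hdb : - (D * b * b) != 0 by rewrite oppr_eq0 !mulf_neq0.
have va : v (a * a) = 2 * v a by rewrite vM //; move: (v a) => x; lia.
have vb : v (- (D * b * b)) = v D + 2 * v b.
  by rewrite vN ?mulf_neq0 // !vM ?mulf_neq0 //; move: (v D) (v b) => x y; lia.
case: (ltP (v (a * a)) (v (- (D * b * b)))) => h.
  have [hs hv] := strict haa hdb h.
  move: hN; rewrite /integ (negPf hs) /= hv va => h'.
  move: h h'; rewrite va vb; move: (v a) (v b) (v D) => x y z.
  by split; right; lia.
have h' : v (- (D * b * b)) < v (a * a).
  rewrite le_eqVlt in h; case/orP: h => [/eqP h|//].
  move: h odd_vD; rewrite va vb /oddz; move: (v D) (v a) (v b) => x y z; lia.
have [hs hv] := strict hdb haa h'.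
move: hN; rewrite /integ addrC (negPf hs) /= hv vb => h''.
move: h' h''; rewrite va vb; move: (v a) (v b) (v D) => x y z.
by split; right; lia.
Qed.

Lemma int_aux1 (x y w : int) : 0 <= x -> 0 <= w + 2 * y -> 0 <= w + 2 * (x + y).
Proof. lia. Qed.

Lemma int_aux2 (d e1 e2 m : int) : 0 <= d + 2 * e1 -> 0 <= d + 2 * e2 ->
  m >= Num.min e1 e2 -> 0 <= d + 2 * m.
Proof. rewrite /Order.min; case: ifP; lia. Qed.

Lemma disc_par D n : discset v D n ->
  (odd n = oddz (v D)) /\ (oddz (v D) -> (3 <= n)%N).
Proof.
move=> [[a1 b1] [[a2 b2] [i1 [i2 [dn vd]]]]].
have N1 := norm_integ i1; have N2 := norm_integ i2.
move: dn vd N1 N2; rewrite detTrE /= => dn vd N1 N2.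
clear i1 i2.
have D0 : D != 0 by apply: contraNneq dn => ->; rewrite mulr0 mul0r.
have e0 : a1 * b2 - a2 * b1 != 0.
  by apply/negP => /eqP ez; move: dn; rewrite ez expr2 mulr0 mulr0 eqxx.
have ve : v (4%:R * D * (a1 * b2 - a2 * b1) ^+ 2) = 2 + v D + 2 * v (a1 * b2 - a2 * b1).
  rewrite !vM ?mulf_neq0 ?four_neq0 ?expf_neq0 // v4.
  by move: (v D) (v (a1 * b2 - a2 * b1)) => x y; lia.
rewrite ve in vd; clear ve dn.
split.
  by move: vd; rewrite /oddz; move: (v D) (v (a1 * b2 - a2 * b1)) => x y; lia.
move=> odd_vD.
have [k1a k1b] := norm_bounds D0 odd_vD N1.
have [k2a k2b] := norm_bounds D0 odd_vD N2.
have hterm : forall a b, (a = 0 \/ 0 <= v a) -> (b = 0 \/ 0 <= v D + 2 * v b) ->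
    a * b = 0 \/ (a * b != 0 /\ 0 <= v D + 2 * v (a * b)).
  move=> a b [->|ha]; first by left; rewrite mul0r.
  case=> [->|hb]; first by left; rewrite mulr0.
  case: (eqVneq (a * b) 0) => [->|hab]; first by left.
  right; split=> //; move: hab; rewrite mulf_eq0 negb_or => /andP[a0 b0].
  by rewrite vM //; apply: int_aux1.
have h1 := hterm _ _ k1a k2b; have h2 := hterm _ _ k2a k1b.
have ve2 : 0 <= v D + 2 * v (a1 * b2 - a2 * b1).
  case: h1 => [e1|[n1 v1']]; case: h2 => [e2|[n2 v2']].
  - by move: e0; rewrite e1 e2 subrr eqxx.
  - by rewrite e1 sub0r vN.
  - by rewrite e2 subr0.
  - have n2' : - (a2 * b1) != 0 by rewrite oppr_eq0.
    have := v_add HF n1 n2' e0; rewrite vN //.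
    exact: int_aux2.
move: vd ve2 odd_vD; rewrite /oddz; move: (v D) (v (a1 * b2 - a2 * b1)) => x y.
case: n => [|[|[|n]]] //; lia.
Qed.


Lemma pbF (P : Prop) : ~ P -> pb P = false.
Proof. by rewrite /pb; case: excluded_middle_informative. Qed.

Lemma pb_true (P : Prop) : pb P -> P.
Proof. by rewrite /pb; case: excluded_middle_informative. Qed.

Lemma ordDisc_sq D : is_square D -> ordDisc v D = 0%N.
Proof. by move=> h; rewrite /ordDisc pbP. Qed.

Lemma ordDisc_nsq D : D != 0 -> ~ is_square D ->
  discset v D (ordDisc v D) /\ (forall n, discset v D n -> (ordDisc v D <= n)%N).
Proof.
move=> D0 nsq; rewrite /ordDisc (pbF nsq).
case: excluded_middle_informative => [H|H]; last first.
  by exfalso; apply: H; eexists; exact: disc_wit D0.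
case: ex_minnP => m Pm minm; split; first exact: pb_true Pm.
by move=> n hn; apply: minm; exact: pbP.
Qed.

Lemma int_even2 (y : int) : ~~ oddz (y + y).
Proof. rewrite /oddz; lia. Qed.

Lemma nsq_odd D : D != 0 -> oddz (v D) -> ~ is_square D.
Proof.
move=> D0 od [y hy]; have y0 : y != 0 by apply: contraNneq D0 => e; rewrite -hy e mul0r.
by move: od; rewrite -hy vM // (negPf (int_even2 _)).
Qed.

Lemma ord_odd D : D != 0 -> oddz (v D) -> ordDisc v D = 3%N.
Proof.
move=> D0 od; have [hd hmin] := ordDisc_nsq D0 (nsq_odd D0 od).
have := hmin _ (disc_wit D0); rewrite od => le3.
have [_ /(_ od) ge3] := disc_par hd.
by apply/eqP; rewrite eqn_leq le3 ge3.
Qed.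

Lemma ord_even D : D != 0 -> ~~ oddz (v D) -> ~ is_square D -> ordDisc v D != 0%N ->
  ordDisc v D = 2%N.
Proof.
move=> D0 ev nsq n0; have [hd hmin] := ordDisc_nsq D0 nsq.
have := hmin _ (disc_wit D0); rewrite (negPf ev) => le2.
have [hpar _] := disc_par hd; rewrite (negPf ev) in hpar.
move: le2 hpar n0; case: (ordDisc v D) => [|[|[|m]]] //.
Qed.

Lemma xi0E D : (xi v D == 0) = (ordDisc v D != 0%N).
Proof.
rewrite /xi; case hs: (pb (is_square D)).
  by rewrite /ordDisc hs.
by case: (ordDisc v D == 0)%N.
Qed.

Lemma xi_sq D : xi v D != 0 -> xi v D ^+ 2 = 1.
Proof.
rewrite /xi; case: (pb (is_square D)); first by move=> _; exact: expr1n.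
case: (ordDisc v D == 0)%N => // _; by rewrite sqrrN expr1n.
Qed.

Lemma brahma D : discset v D 0 ->
  exists s c, s != 0 /\ integ v c /\ D = s * s * (1 + 4%:R * c).
Proof.
move=> [[a1 b1] [[a2 b2] [i1 [i2 [dn vd]]]]].
have N1 := norm_integ i1; have N2 := norm_integ i2.
move: dn vd N1 N2; rewrite detTrE /= => dn vd N1 N2; clear i1 i2.
have D0 : D != 0 by apply: contraNneq dn => ->; rewrite mulr0 mul0r.
move: dn vd.
set e := a1 * b2 - a2 * b1.
set P := a1 * a2 - D * b1 * b2.
set N := (a1 * a1 - D * b1 * b1) * (a2 * a2 - D * b2 * b2).
have hN : integ v N by apply: integM.
have iden : P * P - D * e * e = N by rewrite /P /e /N; ring.
move=> dn vd.
have e0 : e != 0 by apply/negP => /eqP ez; move: dn; rewrite ez expr2 mulr0 mulr0 eqxx.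
have Dee0 : D * e * e != 0 by rewrite !mulf_neq0.
have vDee : v (D * e * e) = -2.
  move: vd; have -> : 4%:R * D * e ^+ 2 = 4%:R * (D * e * e) by rewrite expr2 !mulrA.
  rewrite vM ?four_neq0 // v4; move: (v (D * e * e)) => x; lia.
have ePP : P * P = D * e * e + N by rewrite -iden; ring.
have [PP0 vPP] : P * P != 0 /\ v (P * P) = -2.
  case: (eqVneq N 0) => [N0|N0]; first by rewrite ePP N0 addr0.
  have lt : v (D * e * e) < v N.
    by move: hN; rewrite /integ (negPf N0) vDee /=; move: (v N) => x; lia.
  by rewrite ePP; have [hs hv] := strict Dee0 N0 lt; rewrite hv.
have P0 : P != 0 by apply: contraNneq PP0 => ->; rewrite mul0r.
exists (P / e), (- N / (4%:R * (P * P))); split.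
  by rewrite mulf_neq0 ?invr_eq0.
split.
  case: (eqVneq N 0) => [->|N0]; first by rewrite oppr0 mul0r integ0.
  have h4 : 4%:R * (P * P) != 0 by rewrite mulf_neq0 ?four_neq0.
  rewrite /integ mulf_eq0 oppr_eq0 invr_eq0 (negPf N0) (negPf h4) /=.
  rewrite vM ?oppr_eq0 ?invr_eq0 // vN // vV // vM ?four_neq0 // v4 vPP.
  move: hN; rewrite /integ (negPf N0) /=; move: (v N) => x; lia.
rewrite -iden; field.
by rewrite e0 P0 four_neq0.
Qed.

Lemma disc_half D s c : s != 0 -> integ v c -> D = s * s * (1 + 4%:R * c) ->
  discset v D 0.
Proof.
move=> s0 hc hD.
have h2 := two_neq0'.
exists (1, 0), (2%:R^-1, (2%:R * s)^-1); split; first exact: intK1.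
split; first exact: intKhalf hc hD.
have -> : detTr D (1, 0) (2%:R^-1, (2%:R * s)^-1) = 1 + 4%:R * c.
  rewrite detTrE /= hD; field; by rewrite s0 h2.
by have /andP[-> /eqP ->] := unit14 hc.
Qed.

Lemma ord0_char D : D != 0 -> (ordDisc v D = 0%N <->
  exists s c, s != 0 /\ integ v c /\ D = s * s * (1 + 4%:R * c)).
Proof.
move=> D0; split.
  case: (excluded_middle_informative (is_square D)) => [[y hy]|nsq] h0.
    exists y, 0; split; first by apply: contraNneq D0 => e; rewrite -hy e mul0r.
    by rewrite integ0 mulr0 addr0 mulr1.
  have [hd _] := ordDisc_nsq D0 nsq; rewrite h0 in hd.
  exact: brahma.
move=> [s [c [s0 [hc hD]]]].
case: (excluded_middle_informative (is_square D)) => [sq|nsq]; first exact: ordDisc_sq.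
have [_ hmin] := ordDisc_nsq D0 nsq.
by apply/eqP; rewrite -leqn0; apply: hmin; exact: disc_half hD.
Qed.

Lemma ord0_mul D s c : D != 0 -> s != 0 -> integ v c ->
  (ordDisc v (D * (s * s * (1 + 4%:R * c))) = 0%N <-> ordDisc v D = 0%N).
Proof.
move=> D0 s0 hc.
have /andP[u0 /eqP vu] := unit14 hc.
have w0 : s * s * (1 + 4%:R * c) != 0 by rewrite !mulf_neq0.
rewrite (ord0_char (mulf_neq0 D0 w0)) (ord0_char D0); split.
  move=> [s1 [c1 [s10 [hc1 hD]]]].
  exists (s1 / s), ((c1 - c) / (1 + 4%:R * c)); split; first by rewrite mulf_neq0 ?invr_eq0.
  split.
    apply: integM; first exact: integB.
    by rewrite /integ invr_eq0 (negPf u0) /= vV // vu.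
  have -> : D = D * (s * s * (1 + 4%:R * c)) / (s * s * (1 + 4%:R * c)).
    by rewrite mulfK.
  rewrite hD; field; by rewrite s0 u0.
move=> [s1 [c1 [s10 [hc1 hD]]]].
exists (s1 * s), (c1 + c + 4%:R * c1 * c); split; first by rewrite mulf_neq0.
split.
  by apply: integD; [apply: integD | apply: integM; [apply: integM; [exact: integn|]|]].
rewrite hD; ring.
Qed.


Definition Ev (D : F) : int := v D - (ordDisc v D)%:Z + 1 - xi v D ^+ 2.

Lemma xi0_ord D : xi v D = 0 -> ordDisc v D != 0%N.
Proof. by move=> h; rewrite -xi0E h. Qed.

Lemma ord_xi0 D : ordDisc v D != 0%N -> xi v D = 0.
Proof. by rewrite -xi0E => /eqP. Qed.

Lemma Ev_xin0 D : xi v D != 0 -> Ev D = v D.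
Proof.
move=> h; rewrite /Ev xi_sq //; move: h; rewrite xi0E negbK => /eqP ->.
by rewrite subr0 addrK.
Qed.

Lemma Ev_odd D : D != 0 -> oddz (v D) -> Ev D = v D - 2.
Proof.
move=> D0 od; have o3 := ord_odd D0 od.
rewrite /Ev o3 ord_xi0 ?o3 // expr0n /= subr0; by move: (v D) => x; lia.
Qed.

Lemma Ev_even0 D : D != 0 -> ~~ oddz (v D) -> xi v D = 0 -> Ev D = v D - 1.
Proof.
move=> D0 ev x0; have n0 := xi0_ord x0.
have nsq : ~ is_square D by move=> sq; move: n0; rewrite ordDisc_sq.
rewrite /Ev (ord_even D0 ev nsq n0) x0 expr0n /= subr0; by move: (v D) => x; lia.
Qed.

Lemma oddz_add2 (a b : int) : oddz (a + 2 * b) = oddz a.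
Proof. rewrite /oddz; lia. Qed.

Lemma oddz_add2' (a b : int) : oddz (2 * b + a) = oddz a.
Proof. rewrite /oddz; lia. Qed.

Lemma vpow2 n : v (2%:R ^+ n) = n%:Z.
Proof. by rewrite vX ?two_neq0' // v2 mul1r. Qed.

Lemma pow2_neq0 n : (2%:R : F) ^+ n != 0.
Proof. exact: expf_neq0 two_neq0'. Qed.

Lemma L11 D1 u k : D1 != 0 -> unitb v u ->
  let D := D1 * (2%:R ^+ k * u) in
  (oddz (v D1) -> v D - Ev D1 = k%:Z + 2) /\
  (~~ oddz (v D1) -> xi v D1 = 0 -> v D - Ev D1 = k%:Z + 1) /\
  (xi v D1 != 0 -> v D - Ev D1 = k%:Z).
Proof.
move=> D0 /andP[u0 /eqP vu] D.
have vD : v D = v D1 + k%:Z by rewrite /D !vM ?mulf_neq0 ?pow2_neq0 // vpow2 vu addr0.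
rewrite vD; split; first by move=> od; rewrite Ev_odd //; move: (v D1) => x; lia.
split; first by move=> ev x0; rewrite Ev_even0 //; move: (v D1) => x; lia.
by move=> x0; rewrite Ev_xin0 //; move: (v D1) => x; lia.
Qed.

Lemma L12 D1 u k : D1 != 0 -> unitb v u ->
  let D := D1 * (- 4%:R * (2%:R ^+ k * u)) in
  (oddz (v D) -> Ev D - v D1 = k%:Z) /\
  (~~ oddz (v D) -> xi v D = 0 -> Ev D - v D1 = k%:Z + 1) /\
  (xi v D != 0 -> Ev D - v D1 = k%:Z + 2).
Proof.
move=> D0 /andP[u0 /eqP vu] D.
have h4 : - 4%:R != 0 :> F by rewrite oppr_eq0 four_neq0.
have D0' : D != 0 by rewrite /D !mulf_neq0 ?pow2_neq0.
have vD : v D = v D1 + 2 + k%:Z by rewrite /D !vM ?mulf_neq0 ?pow2_neq0 // vN4 vpow2 vu addr0 addrA.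
split; first by move=> od; rewrite Ev_odd // vD; move: (v D1) => x; lia.
split; first by move=> ev x0; rewrite Ev_even0 // vD; move: (v D1) => x; lia.
by move=> x0; rewrite Ev_xin0 // vD; move: (v D1) => x; lia.
Qed.

Lemma Ev_xi0 D : D != 0 -> xi v D = 0 -> Ev D = v D - (if oddz (v D) then 2 else 1).
Proof.
move=> D0 x0; case: ifP => od; first exact: Ev_odd.
by apply: Ev_even0 => //; rewrite od.
Qed.

Lemma L2a D1 w k : D1 != 0 -> unitb v w ->
  let D := D1 * (- 4%:R * ((2%:R ^+ k) ^+ 2 * w)) in
  xi v D1 = 0 -> xi v D = 0 -> Ev D = Ev D1 + 2 * k%:Z + 2.
Proof.
move=> D0 /andP[w0 /eqP vw] D x1 x2.
have h4 : - 4%:R != 0 :> F by rewrite oppr_eq0 four_neq0.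
have D0' : D != 0 by rewrite /D !mulf_neq0 ?expf_neq0 ?pow2_neq0 ?two_neq0'.
have vD : v D = v D1 + 2 * (k%:Z + 1).
  rewrite /D !vM ?mulf_neq0 ?expf_neq0 ?pow2_neq0 ?two_neq0' // vN4 !vpow2 vw.
  by move: (v D1) => x; lia.
rewrite !Ev_xi0 // vD oddz_add2; by move: (v D1) => x; case: ifP => _; lia.
Qed.

Lemma vstep D1 w k : D1 != 0 -> unitb v w ->
  v (D1 * (- 4%:R * ((2%:R ^+ k) ^+ 2 * w))) = v D1 + 2 * k%:Z + 2.
Proof.
move=> D0 /andP[w0 /eqP vw].
have h4 : - 4%:R != 0 :> F by rewrite oppr_eq0 four_neq0.
rewrite !vM ?mulf_neq0 ?expf_neq0 ?pow2_neq0 ?two_neq0' // vN4 !vpow2 vw.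
by move: (v D1) => x; lia.
Qed.

Lemma L3b D1 t c k : D1 != 0 -> t != 0 -> v t = 0 -> integ v c ->
  Ev (D1 * ((2%:R ^+ k) ^+ 2 * (t * t * (1 + 4%:R * c)))) = Ev D1 + 2 * k%:Z.
Proof.
move=> D0 t0 vt hc.
have /andP[u0 /eqP vu] := unit14 hc.
have -> : D1 * ((2%:R ^+ k) ^+ 2 * (t * t * (1 + 4%:R * c))) =
   D1 * ((2%:R ^+ k * t) * (2%:R ^+ k * t) * (1 + 4%:R * c)) by ring.
have s0 : 2%:R ^+ k * t != 0 by rewrite mulf_neq0 ?pow2_neq0.
set D := D1 * _.
have D0' : D != 0 by rewrite /D mulf_neq0 // mulf_neq0 // mulf_neq0.
have vD : v D = v D1 + 2 * k%:Z.
  rewrite /D !vM ?mulf_neq0 ?pow2_neq0 // vpow2 vt vu.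
  by move: (v D1) => x; lia.
have od : oddz (v D) = oddz (v D1) by rewrite vD oddz_add2.
case: (boolP (oddz (v D1))) => o1.
  by rewrite !Ev_odd // ?od // vD; move: (v D1) => x; lia.
case: (eqVneq (ordDisc v D1) 0%N) => h1.
  have h2 : ordDisc v D = 0%N by apply/(ord0_mul D0 s0 hc).
  rewrite !Ev_xin0 ?vD // xi0E negbK; apply/eqP => //.
have h2 : ordDisc v D != 0%N.
  by apply/eqP => /(ord0_mul D0 s0 hc) /eqP; rewrite (negPf h1).
rewrite !Ev_even0 ?od // ?ord_xi0 // vD; by move: (v D1) => x; lia.
Qed.


Lemma vstep3 D1 t c k : D1 != 0 -> t != 0 -> v t = 0 -> integ v c ->
  v (D1 * ((2%:R ^+ k) ^+ 2 * (t * t * (1 + 4%:R * c)))) = v D1 + 2 * k%:Z.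
Proof.
move=> D0 t0 vt hc; have /andP[u0 /eqP vu] := unit14 hc.
rewrite !vM ?mulf_neq0 ?expf_neq0 ?pow2_neq0 ?two_neq0' // !vpow2 vt vu.
by move: (v D1) => x; lia.
Qed.

Lemma unimod_unit n (M : 'M[F]_n) : unimod_diag v M -> unitb v (\det M).
Proof.
case/andP => /forallP hoff /forallP hd.
have -> : M = diag_mx (\row_i M i i).
  apply/matrixP => i j; rewrite !mxE; case: (eqVneq i j) => [->|ne]; first by rewrite mulr1n.
  rewrite mulr0n; have /forallP/(_ j) := hoff i; rewrite ne /= => /eqP //.
rewrite det_diag; apply: (big_ind (fun x => unitb v x)); [exact: unitb1 | exact: unitbM |].
by move=> i _; rewrite mxE; exact: hd.
Qed.

Lemma half_w n (M : 'M[F]_n) : half_even_unimod v M -> n = 2%N /\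
  exists t c, t != 0 /\ v t = 0 /\ integ v c /\
    - (4%:R * \det M) = t * t * (1 + 4%:R * c).
Proof.
case/andP => /andP[/andP[/eqP n2 hsym] hdg] hu; subst n; split => //.
have [s01 i01] : M 1 0 = M 0 1 /\ integ v (2%:R * M 0 1).
  by move/forallP: hsym => /(_ 0) /forallP /(_ 1) /andP[/eqP e h]; split; [rewrite e|].
have ia : integ v (M 0 0) := forallP hdg 0.
have ic : integ v (M 1 1) := forallP hdg 1.
move: hu; rewrite detZ det2 s01.
set a := M 0 0; set c0 := M 1 1; set b := 2%:R * M 0 1.
have e4 : (2%:R ^+ 2 : F) * (a * c0 - M 0 1 * M 0 1) = 4%:R * (a * c0) - b * b.
  by rewrite /b; ring.
rewrite e4 => /andP[X0 /eqP vX].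
have hac : integ v (a * c0) by apply: integM.
have key : forall X Y : F, X != 0 -> v X = 0 -> (Y = 0 \/ (Y != 0 /\ 1 <= v Y)) ->
    Y - X != 0 /\ v (Y - X) = 0.
  move=> X Y X0' vX' [->|[Y0 vY]]; first by rewrite sub0r oppr_eq0 X0' vN.
  have nX : - X != 0 by rewrite oppr_eq0.
  have lt : v (- X) < v Y by rewrite vN // vX'; move: vY; move: (v Y) => x; lia.
  by have [hs hv] := strict nX Y0 lt; rewrite addrC hs hv vN.
have [bb0 vbb] : b * b != 0 /\ v (b * b) = 0.
  have -> : b * b = 4%:R * (a * c0) - (4%:R * (a * c0) - b * b) by ring.
  apply: key => //.
  case: (eqVneq (a * c0) 0) => [->|z]; first by left; rewrite mulr0.
  right; rewrite mulf_neq0 ?four_neq0 //; split => //.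
  rewrite vM ?four_neq0 // v4; move: hac; rewrite /integ (negPf z) /=.
  by move: (v (a * c0)) => x; lia.
have b0 : b != 0 by apply: contraNneq bb0 => ->; rewrite mul0r.
exists b, (- (a * c0) / (b * b)); split => //.
split; first by move: vbb; rewrite vM //; move: (v b) => x; lia.
split.
  case: (eqVneq (a * c0) 0) => [->|z]; first by rewrite oppr0 mul0r integ0.
  rewrite /integ mulf_eq0 oppr_eq0 invr_eq0 (negPf z) (negPf bb0) /=.
  rewrite vM ?oppr_eq0 ?invr_eq0 // vN // vV // vbb subr0.
  by move: hac; rewrite /integ (negPf z).
rewrite /b; field; move: b0; rewrite /b mulf_eq0 negb_or => /andP[h1 h2]; by rewrite h1 h2.
Qed.

Lemma det_Bpre_neq0 (d k : nat -> nat) (C : forall i, 'M[F]_(d i)) j :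
  (forall i, (i < j)%N -> \det (C i) != 0) -> \det (Bpre k C j) != 0.
Proof.
elim: j => [|j IH] H; first by rewrite /= det_mx00 oner_neq0.
rewrite /= det_ublock detZ !mulf_neq0 ?expf_neq0 ?pow2_neq0 ?two_neq0' //.
  by apply: IH => i hi; apply: H; exact: ltnW.
exact: H.
Qed.

End Val.

Lemma half_even (n : nat) : ~~ odd n -> ((n + 1)./2 = n./2)%N. Proof. lia. Qed.
Lemma half_odd (n : nat) : odd n -> ((n + 1)./2 = n./2 + 1)%N. Proof. lia. Qed.
Lemma half_2 (n : nat) : ((n + 2)./2 = n./2 + 1)%N. Proof. lia. Qed.
Lemma odd_p1 (n : nat) : odd (n + 1) = ~~ odd n. Proof. lia. Qed.
Lemma odd_p2 (n : nat) : odd (n + 2) = odd n. Proof. lia. Qed.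

Unset Implicit Arguments. Set Strict Implicit.

Theorem lemma2p2 (F : fieldType) (v : F -> int) (HF : unram2adic v)
  (r : nat) (d k : nat -> nat) (C : forall i, 'M[F]_(d i)) :
  preoptimal v r.+1 d k C ->
  let B := Bpre k C r.+1 in
  let B1 := Bpre k C r in
  let kr := (k r)%:Z in
  (* (1) *)
  (d r = 1%N ->
     (* (1.1) *)
     (~~ odd (dsum d r) ->
        (oddz (v (\det B1)) -> Delta v B - Delta v B1 = kr + 2) /\
        (~~ oddz (v (\det B1)) -> xiB v B1 = 0 -> Delta v B - Delta v B1 = kr + 1) /\
        (xiB v B1 != 0 -> Delta v B - Delta v B1 = kr)) /\
     (* (1.2) *)
     (odd (dsum d r) ->
        (oddz (v (\det B)) -> Delta v B - Delta v B1 = kr) /\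
        (~~ oddz (v (\det B)) -> xiB v B = 0 -> Delta v B - Delta v B1 = kr + 1) /\
        (xiB v B != 0 -> Delta v B - Delta v B1 = kr + 2))) /\
  (* (2) *)
  (d r = 2%N -> unimod_diag v (C r) -> Delta v B = Delta v B1 + 2 * kr + 2) /\
  (* (3) *)
  (half_even_unimod v (C r) -> Delta v B = Delta v B1 + 2 * kr).
Proof.
move=> PO B B1 kr.
move: PO; rewrite /preoptimal => -[shape [_ [_ [PO3 _]]]].
have blk : forall i, (i < r.+1)%N -> \det (C i) != 0.
  move=> i /shape [_ /orP[/(unimod_unit HF) /andP[] //|]].
  move=> /(half_w HF) [_ [t [c [t0 [_ [hc e]]]]]].
  apply/negP => /eqP h0; move: e; rewrite h0 mulr0 oppr0 => /esym /eqP.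
  have /andP[u0 _] := unit14 HF hc.
  by rewrite !mulf_eq0 (negPf t0) (negPf u0).
have X0 : \det B1 != 0.
  by apply: (det_Bpre_neq0 HF) => i hi; apply: blk; exact: ltnW.
have h4 : (- 4%:R : F) != 0 by rewrite oppr_eq0 (four_neq0 HF).
have D10 : DB B1 != 0 by rewrite /DB mulf_neq0 ?expf_neq0.
have detBE : \det B = \det B1 * ((2%:R ^+ k r) ^+ d r * \det (C r)).
  by rewrite /B /= det_ublock detZ.
have YE : forall w : F, (2%:R ^+ k r) ^+ d r * \det (C r) = w -> DB B = (-4) ^+ (dsum d r + d r)./2 * (\det B1 * w).
  by move=> w <-; rewrite /DB -detBE.
have vm4 : forall h, v ((- 4%:R) ^+ h) = 2 * h%:Z.
  by move=> h; rewrite (vX HF) // (vN4 HF).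
have oddB1 : oddz (v (DB B1)) = oddz (v (\det B1)).
  by rewrite /DB (vMn HF) ?expf_neq0 // vm4 oddz_add2'.
have odd1 : forall j, odd (dsum d j.+1) = odd (dsum d j + d j) by [].
split.
  move=> dr1.
  have dg : unimod_diag v (C r).
    have [_ /orP[//|]] := shape r (ltnSn r).
    by case/andP => /andP[/andP[/eqP h2 _] _] _; exfalso; move: h2; rewrite dr1.
  have u := unimod_unit HF dg.
  have Y1 : (2%:R ^+ k r) ^+ d r * \det (C r) = 2%:R ^+ k r * \det (C r).
    by congr (_ * _); rewrite dr1 expr1.
  have u0 : \det (C r) != 0 by case/andP: u.
  have B0 : \det B != 0 by rewrite detBE Y1 !mulf_neq0 ?(pow2_neq0 HF).
  have oddB : oddz (v (DB B)) = oddz (v (\det B)).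
    by rewrite /DB (vMn HF) ?expf_neq0 // vm4 oddz_add2'.
  split.
  - move=> ev1.
    have EB1 : Delta v B1 = Ev v (DB B1) by rewrite /Delta (negPf ev1).
    have oB : odd (dsum d r.+1) by rewrite odd1 dr1 odd_p1 ev1.
    have EB : Delta v B = v (DB B) by rewrite /Delta oB.
    have hh : ((dsum d r.+1)./2 = (dsum d r)./2)%N by rewrite /= dr1 half_even.
    have eD : DB B = DB B1 * (2%:R ^+ k r * \det (C r)) by rewrite /DB hh detBE Y1; ring.
    rewrite EB EB1 eD -oddB1 /xiB.
    exact: (L11 HF (k r) D10 u).
  - move=> od1.
    have EB1 : Delta v B1 = v (DB B1) by rewrite /Delta od1.
    have oB : ~~ odd (dsum d r.+1) by rewrite odd1 dr1 odd_p1 od1.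
    have EB : Delta v B = Ev v (DB B) by rewrite /Delta (negPf oB).
    have hh : ((dsum d r.+1)./2 = (dsum d r)./2 + 1)%N by rewrite /= dr1 half_odd.
    have eD : DB B = DB B1 * (- 4%:R * (2%:R ^+ k r * \det (C r))).
      by rewrite /DB hh detBE Y1 exprD expr1; ring.
    rewrite EB EB1 -oddB /xiB eD.
    exact: (L12 HF (k r) D10 u).
split.
  move=> dr2 ud.
  have [_ hP] := PO3 r (ltnSn r) ud dr2.
  have u := unimod_unit HF ud.
  have Y2 : (2%:R ^+ k r) ^+ d r * \det (C r) = (2%:R ^+ k r) ^+ 2 * \det (C r).
    by congr (_ * _); rewrite dr2.
  have hh : ((dsum d r.+1)./2 = (dsum d r)./2 + 1)%N by rewrite /= dr2 half_2.
  have eD : DB B = DB B1 * (- 4%:R * ((2%:R ^+ k r) ^+ 2 * \det (C r))).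
    by rewrite /DB hh detBE Y2 exprD expr1; ring.
  case: hP => [[evn [x1 x2]]|[od1 _]].
    have ev1 : ~~ odd (dsum d r) by move: evn; rewrite odd1 dr2 odd_p2.
    have EB1 : Delta v B1 = Ev v (DB B1) by rewrite /Delta (negPf ev1).
    have EB : Delta v B = Ev v (DB B) by rewrite /Delta (negPf evn).
    move: x1 x2; rewrite /xiB -/B1 -/B EB EB1 eD => x1 x2.
    exact: (L2a HF (k := k r) D10 u x1 x2).
  have oB : odd (dsum d r.+1) by rewrite odd1 dr2 odd_p2.
  rewrite /Delta oB od1 eD.
  exact: (vstep HF (k r) D10 u).
move=> hh.
have [dr2 [t [c [t0 [vt [hc e]]]]]] := half_w HF hh.
have Y3 : (2%:R ^+ k r) ^+ d r * \det (C r) = (2%:R ^+ k r) ^+ 2 * \det (C r).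
  by congr (_ * _); rewrite dr2.
have hh2 : ((dsum d r.+1)./2 = (dsum d r)./2 + 1)%N by rewrite /= dr2 half_2.
have eD : DB B = DB B1 * ((2%:R ^+ k r) ^+ 2 * (t * t * (1 + 4%:R * c))).
  by rewrite /DB hh2 detBE Y3 exprD expr1; rewrite -e; ring.
case: (boolP (odd (dsum d r))) => od1.
  have oB : odd (dsum d r.+1) by rewrite odd1 dr2 odd_p2.
  rewrite /Delta oB od1 eD.
  exact: (vstep3 HF (k r) D10 t0 vt hc).
have oB : ~~ odd (dsum d r.+1) by rewrite odd1 dr2 odd_p2.
have EB1 : Delta v B1 = Ev v (DB B1) by rewrite /Delta (negPf od1).
have EB : Delta v B = Ev v (DB B) by rewrite /Delta (negPf oB).
rewrite EB EB1 eD.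
exact: (L3b HF (k r) D10 t0 vt hc).
Qed.
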